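(* Consider the generalized linear model described in the context with a predetermined set of distinct design points $\{\mathbf{x}_1,\ldots,\mathbf{x}_m\}\subset\mathbb{R}^d$, $d\ge1$, and $m>p\ge2$. Then (i) an A-optimal allocation that maximizes $h(\mathbf{w})$, $\mathbf{w}\in S_m$, exists; (ii) the set of A-optimal allocations is convex; and (iii) if $\mathbf{w}_*=(w_1^*,\ldots,w_m^* )^T\in S_m$ satisfies $f(\mathbf{w}_* )>0$, then $\mathbf{w}_*$ is A-optimal among $S_m$ if and only if, for each $i=1,\ldots,m$, $w_i^*$ maximizes $h_i(x)$, $x\in[0,1]$, where $h_i$ is associated with $\mathbf{w}_*$.
   Context: Generalized linear model (GLM): independent responses $Y_i$ from a one-parameter exponential family with $E(Y_i)=\mu_i$ and $\eta_i=g(\mu_i)=\mathbf{q}(\mathbf{x}_i)^T\boldsymbol\beta$, where $g$ is the link function, $\mathbf{q}(\mathbf{x})=(q_1(\mathbf{x}),\ldots,q_p(\mathbf{x}))^T$ are predictor functions, and $\boldsymbol\beta\in\mathbb{R}^p$ is a fixed (assumed) parameter vector. Let $\nu_i=(\partial\mu_i/\partial\eta_i)^2/\mathrm{Var}(Y_i)\ge0$ and $\mathbf{X}=(\mathbf{q}(\mathbf{x}_1),\ldots,\mathbf{q}(\mathbf{x}_m))^T$. Let $S_m=\{\mathbf{w}\in\mathbb{R}^m:w_i\ge0,\sum_iw_i=1\}$, $\mathbf{W}=\mathrm{diag}\{w_1\nu_1,\ldots,w_m\nu_m\}$, $f(\mathbf{w})=|\mathbf{X}^T\mathbf{W}\mathbf{X}|$,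 and $h(\mathbf{w})=[\mathrm{tr}((\mathbf{X}^T\mathbf{W}\mathbf{X})^{-1})]^{-1}$ if $f(\mathbf{w})>0$, $h(\mathbf{w})=0$ otherwise; $\mathbf{w}$ is A-optimal if it maximizes $h$ over $S_m$. For $\mathbf{w}$ and $i$ with $0\le w_i<1$, $h_i(x)=h\big(\tfrac{1-x}{1-w_i}w_1,\ldots,\tfrac{1-x}{1-w_i}w_{i-1},x,\tfrac{1-x}{1-w_i}w_{i+1},\ldots,\tfrac{1-x}{1-w_i}w_m\big)$ for $x\in[0,1]$ (the function $h_i$ ''associated with $\mathbf{w}$''). *)

(* Defs.v *)
From HB Require Import structures.
From mathcomp Require Import all_boot all_order all_algebra.
From mathcomp Require Import reals.
Set Implicit Arguments. Unset Strict Implicit. Unset Printing Implicit Defensive.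
Import Order.TTheory GRing.Theory Num.Theory.
Local Open Scope ring_scope.

Section GLM.
Variables (R : realType) (m p : nat).

Definition in_simplex (w : 'I_m -> R) : Prop :=
  (forall i, 0 <= w i) /\ \sum_(i < m) w i = 1.

Definition Wmat (nu w : 'I_m -> R) : 'M[R]_m :=
  diag_mx (\row_i (w i * nu i)).

Definition info_mx (X : 'M[R]_(m, p)) (nu w : 'I_m -> R) : 'M[R]_p :=
  X^T *m Wmat nu w *m X.

Definition fdet (X : 'M[R]_(m, p)) (nu w : 'I_m -> R) : R :=
  \det (info_mx X nu w).

Definition hA (X : 'M[R]_(m, p)) (nu w : 'I_m -> R) : R :=
  if 0 < fdet X nu w then (\tr (invmx (info_mx X nu w)))^-1 else 0.

Definition A_optimal (X : 'M[R]_(m, p)) (nu w : 'I_m -> R) : Prop :=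
  in_simplex w /\ forall w', in_simplex w' -> hA X nu w' <= hA X nu w.

(* h_i associated with w (meaningful when 0 <= w i < 1) *)
Definition h_assoc (X : 'M[R]_(m, p)) (nu w : 'I_m -> R) (i : 'I_m) (x : R) : R :=
  hA X nu (fun j => if j == i then x else (1 - x) / (1 - w i) * w j).

End GLM.

(* Main.v *)
Require Import Defs.
From HB Require Import structures.
From mathcomp Require Import all_boot all_order all_algebra.
From mathcomp Require Import reals.
From mathcomp Require Import ring lra finmap.
From mathcomp Require Import boolp classical_sets topology normedtype.
Import Order.TTheory GRing.Theory Num.Theory.
Import numFieldNormedType.Exports.
Local Open Scope classical_set_scope.
Local Open Scope ring_scope.
Set Implicit Arguments. Unset Strict Implicit. Unset Printing Implicit Defensive.

Section Alg.
Variables (R : realType) (m p : nat) (X : 'M[R]_(m, p)) (nu : 'I_m -> R).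
Hypothesis nu_ge0 : forall i, 0 <= nu i.
Hypothesis p_gt0 : (0 < p)%N.

Definition xr (k : 'I_m) : 'rV[R]_p := row k X.
Definition Mw (w : 'I_m -> R) : 'M[R]_p := locked (info_mx X nu w).
Lemma MwE w : Mw w = info_mx X nu w. Proof. by rewrite /Mw -lock. Qed.

Lemma tr11 (A : 'M[R]_1) : \tr A = A 0 0.
Proof. by rewrite /mxtrace big_ord1. Qed.

Lemma Mw_sum w : Mw w = \sum_k (w k * nu k) *: ((xr k)^T *m xr k).
Proof.
apply/matrixP => a b; rewrite MwE /info_mx /Wmat mul_mx_diag !mxE summxE.
apply: eq_bigr => k _; rewrite !mxE big_ord1 !mxE; ring.
Qed.

Lemma Mw_tr C w : \tr (C *m Mw w) = \sum_k w k * (nu k * (xr k *m C *m (xr k)^T) 0 0).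
Proof.
rewrite Mw_sum mulmx_sumr raddf_sum /=; apply: eq_bigr => k _.
rewrite -scalemxAr mxtraceZ mulmxA mxtrace_mulC mulmxA tr11; ring.
Qed.

Lemma sq_ge0 n (y : 'rV[R]_n) : 0 <= (y *m y^T) 0 0.
Proof. rewrite mxE; apply: sumr_ge0 => j _; rewrite mxE -expr2; exact: sqr_ge0. Qed.

Lemma sq_eq0 n (y : 'rV[R]_n) : (y *m y^T) 0 0 = 0 -> y = 0.
Proof.
rewrite mxE => H0.
have H : forall i, y 0 i * y^T i 0 = 0.
  move=> i; apply: (psumr_eq0P _ H0) => // l _; rewrite mxE -expr2 sqr_ge0 //.
apply/rowP => j; rewrite mxE.
have := H j; rewrite mxE -expr2 => /eqP; rewrite sqrf_eq0 => /eqP //.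
Qed.

Definition nonneg (w : 'I_m -> R) := forall k, 0 <= w k.

Lemma psd n w (P : 'M[R]_(p, n)) : nonneg w -> 0 <= \tr (P^T *m Mw w *m P).
Proof.
move=> w0; rewrite mxtrace_mulC mulmxA Mw_tr; apply: sumr_ge0 => k _.
apply: mulr_ge0 => //; apply: mulr_ge0 => //.
have -> : xr k *m (P *m P^T) *m (xr k)^T = (xr k *m P) *m (xr k *m P)^T.
  by rewrite trmx_mul !mulmxA.
exact: sq_ge0.
Qed.

Lemma Msym w : (Mw w)^T = Mw w.
Proof.
by rewrite MwE /info_mx !trmx_mul trmxK /Wmat tr_diag_mx mulmxA.
Qed.

Lemma hA_E w : hA X nu w = if 0 < \det (Mw w) then (\tr (invmx (Mw w)))^-1 else 0.
Proof. by rewrite MwE. Qed.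

Definition bf w (P Q : 'M[R]_p) := \tr (P^T *m Mw w *m Q).

Lemma bf_sym w P Q : bf w P Q = bf w Q P.
Proof. by rewrite /bf -[LHS]mxtrace_tr trmx_mul (trmx_mul (P^T)) Msym trmxK mulmxA. Qed.

Lemma bf_exp w P Q l :
  bf w (P - l *: Q) (P - l *: Q) = bf w P P - 2 * l * bf w P Q + l ^+ 2 * bf w Q Q.
Proof.
have E : (P - l *: Q)^T = P^T - l *: Q^T by apply/matrixP => a b; rewrite !mxE.
rewrite /bf E mulmxBl mulmxBr !mulmxBl -!scalemxAl -!scalemxAr.
rewrite !raddfB /= !mxtraceZ.
have := bf_sym w P Q; rewrite /bf => ->; ring.
Qed.

Lemma cs_real (a b c : R) : 0 <= c -> (forall l, 0 <= a - 2 * l * b + l ^+ 2 * c) ->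
  b ^+ 2 <= a * c.
Proof.
move=> c0 H; have [cz|cp] := eqVneq c 0.
  have [bz|bn] := eqVneq b 0; first by rewrite bz cz; lra.
  have := H ((a + 1) / (2 * b)).
  have -> : a - 2 * ((a + 1) / (2 * b)) * b + ((a + 1) / (2 * b)) ^+ 2 * c = -1.
    by rewrite cz; field; rewrite bn.
  lra.
have cpos : 0 < c by rewrite lt_def cp c0.
have := H (b / c) => H1.
have : 0 <= (a - 2 * (b / c) * b + (b / c) ^+ 2 * c) * c by apply: mulr_ge0 => //; lra.
have -> : (a - 2 * (b / c) * b + (b / c) ^+ 2 * c) * c = a * c - b ^+ 2 by field.
lra.
Qed.

Lemma CS w P Q : nonneg w -> bf w P Q ^+ 2 <= bf w P P * bf w Q Q.
Proof.
move=> w0; apply: cs_real; first exact: psd.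
move=> l; rewrite -bf_exp; exact: psd.
Qed.


Lemma tr11_mul (y : 'M[R]_1) : (y *m y^T) 0 0 = y 0 0 ^+ 2.
Proof. by rewrite mxE big_ord1 mxE expr2. Qed.

Lemma Q_eq0 w (v : 'rV[R]_p) : nonneg w -> \tr (v^T *m v *m Mw w) = 0 -> v *m Mw w = 0.
Proof.
move=> w0; rewrite Mw_tr => H0.
have E k : xr k *m (v^T *m v) *m (xr k)^T = (xr k *m v^T) *m (xr k *m v^T)^T.
  by rewrite trmx_mul trmxK !mulmxA.
have H k : w k * (nu k * (xr k *m v^T) 0 0 ^+ 2) = 0.
  rewrite -tr11_mul -E; apply: (psumr_eq0P _ H0) => // l _.
  by apply: mulr_ge0 => //; apply: mulr_ge0 => //; rewrite E sq_ge0.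
have H2 k : w k * nu k * (v *m (xr k)^T) 0 0 = 0.
  have -> : v *m (xr k)^T = (xr k *m v^T)^T by rewrite trmx_mul trmxK.
  rewrite [X in _ * X]mxE.
  apply/eqP; rewrite -sqrf_eq0; apply/eqP.
  have -> : (w k * nu k * (xr k *m v^T) 0 0) ^+ 2 = w k * nu k * (w k * (nu k * (xr k *m v^T) 0 0 ^+ 2)) by ring.
  by rewrite H mulr0.
rewrite Mw_sum mulmx_sumr; apply: big1 => k _.
rewrite -scalemxAr mulmxA [v *m _]mx11_scalar mul_scalar_mx scalerA H2 scale0r //.
Qed.

Lemma Q_zero w (v : 'rV[R]_p) : v *m Mw w = 0 -> \tr (v^T *m v *m Mw w) = 0.
Proof. by move=> H; rewrite -mulmxA H mulmx0 linear0. Qed.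

Lemma det_pos_gen (N : 'M[R]_p) : (forall v : 'rV_p, 0 <= (v *m N *m v^T) 0 0) ->
  \det N != 0 -> 0 < \det N.
Proof.
move=> Npsd dN; rewrite lt_def dN /=.
case: (lerP 0 (\det N)) => // dneg.
pose Np : 'M[{poly R}]_p := map_mx polyC N + 'X *: map_mx polyC (1%:M - N).
have ev t : (\det Np).[t] = \det (N + t *: (1%:M - N)).
  rewrite -horner_evalE -det_map_mx; congr (\det _); apply/matrixP => i j.
  by rewrite !mxE /= horner_evalE !hornerE.
have [|t /andP[t0 t1] rt] := @poly_ivt R (\det Np) 0 1 ler01.
  by rewrite !ev scale0r addr0 scale1r addrC subrK det1 ltW //= ler01.
move: rt; rewrite /root ev => /det0P [v vn0 vE].
have eq1 : (v *m (N + t *: (1%:M - N)) *m v^T) 0 0 = (v *m N *m v^T) 0 0 + t * ((v *m v^T) 0 0 - (v *m N *m v^T) 0 0).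
  by rewrite mulmxDr -scalemxAr mulmxBr mulmx1 mulmxDl -scalemxAl mulmxBl !mxE.
rewrite vE mul0mx mxE in eq1.
have q0 := Npsd v; have n0 := sq_ge0 v.
have h1 : 0 <= (1 - t) * (v *m N *m v^T) 0 0 by apply: mulr_ge0 => //; lra.
have h2 : 0 <= t * (v *m v^T) 0 0 by apply: mulr_ge0.
have : t * (v *m v^T) 0 0 = 0 by lra.
have [tz|tn0] := eqVneq t 0.
  move=> _; move: vE; rewrite tz scale0r addr0 => vN.
  by move/det0P: (ex_intro2 (fun v => v != 0) (fun v => v *m N = 0) v vn0 vN); rewrite (negbTE dN).
move/eqP; rewrite mulf_eq0 (negbTE tn0) /= => /eqP /sq_eq0 v0.
by rewrite v0 eqxx in vn0.
Qed.


Lemma qf_ge0 w (v : 'rV[R]_p) : nonneg w -> 0 <= (v *m Mw w *m v^T) 0 0.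
Proof. by move=> w0; rewrite -tr11; have := psd (v^T) w0; rewrite trmxK. Qed.

Lemma det_pos w : nonneg w -> \det (Mw w) != 0 -> 0 < \det (Mw w).
Proof. by move=> w0; apply: det_pos_gen => v; exact: qf_ge0. Qed.


Lemma unit_of w : 0 < \det (Mw w) -> Mw w \in unitmx.
Proof. by move=> h; rewrite unitmxE unitfE lt0r_neq0. Qed.

Lemma inv_sym w : (invmx (Mw w))^T = invmx (Mw w).
Proof. by rewrite trmx_inv Msym. Qed.

Lemma bf_inv_l w' (A : 'M[R]_p) Q : 0 < \det (Mw w') -> A^T = A ->
  bf w' A (invmx (Mw w') *m Q) = \tr (A *m Q).
Proof.
move=> h As; rewrite /bf As -!mulmxA (mulmxA (Mw w')) mulmxV ?unit_of // mul1mx //.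
Qed.

Lemma trinv_pos w : nonneg w -> 0 < \det (Mw w) -> 0 < \tr (invmx (Mw w)).
Proof.
move=> w0 h; set A := invmx (Mw w).
have cs := CS A 1%:M w0.
have e1 : bf w A 1%:M = p%:R.
  by rewrite /bf inv_sym mulmx1 mulVmx ?unit_of // mxtrace1.
have e2 : bf w A A = \tr A.
  by rewrite /bf inv_sym mulVmx ?unit_of // mul1mx.
have : 0 <= \tr A by rewrite -e2; exact: psd.
rewrite le_eqVlt => /orP [/eqP e|//].
move: cs; rewrite e1 e2 -e mul0r.
have : 0 < (p%:R : R) by rewrite ltr0n.
move=> pp; nra.
Qed.

Lemma real1 (a b t : R) : 0 < a -> 0 < b -> a ^+ 2 <= t * b -> b^-1 <= (a ^+ 2)^-1 * t.
Proof.
move=> a0 b0 h; rewrite -subr_ge0.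
have -> : (a ^+ 2)^-1 * t - b^-1 = (t * b - a ^+ 2) / (a ^+ 2 * b).
  by field; rewrite !lt0r_neq0.
by apply: divr_ge0; [lra| apply: mulr_ge0; [exact: sqr_ge0|lra]].
Qed.

Lemma real2 (n f s : R) : 0 < n -> 0 < f -> n ^+ 2 <= f * (s * n) -> f^-1 <= n^-1 * s.
Proof.
move=> n0 f0 h.
have h2 : n <= f * s.
  have : n * n <= (f * s) * n by rewrite -expr2; lra.
  by rewrite ler_pM2r.
rewrite -subr_ge0.
have -> : n^-1 * s - f^-1 = (f * s - n) / (n * f) by field; rewrite !lt0r_neq0.
by apply: divr_ge0; [lra| apply: mulr_ge0; lra].
Qed.

Definition Cpos w := let A := invmx (Mw w) in ((\tr A) ^+ 2)^-1 *: (A *m A).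

Lemma SL_pos w : nonneg w -> 0 < \det (Mw w) ->
  (forall w', nonneg w' -> hA X nu w' <= \tr (Cpos w *m Mw w')) /\ \tr (Cpos w *m Mw w) = hA X nu w.
Proof.
move=> w0 h; rewrite /Cpos.
  set A := invmx (Mw w); set phi := \tr A.
  have phi0 : 0 < phi := trinv_pos w0 h.
  split.
    move=> w' w0'; rewrite -scalemxAl mxtraceZ hA_E.
    case: ifP => h'.
      set B := invmx (Mw w').
      have cs := CS A B w0'.
      have e1 : bf w' A B = phi.
        by have := @bf_inv_l w' A 1%:M h' (inv_sym w); rewrite !mulmx1.
      have e2 : bf w' A A = \tr (A *m A *m Mw w').
        by rewrite /bf inv_sym mxtrace_mulC mulmxA.
      have e3 : bf w' B B = \tr B.
        by rewrite /bf inv_sym mulVmx ?unit_of // mul1mx.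
      rewrite e1 e2 e3 in cs.
      by apply: real1 => //; exact: trinv_pos.
    apply: mulr_ge0; first by rewrite invr_ge0 sqr_ge0.
    by have := psd A w0'; rewrite inv_sym mxtrace_mulC mulmxA.
  rewrite -scalemxAl mxtraceZ hA_E h -mulmxA mulVmx ?unit_of // mulmx1 -/phi.
  by field; rewrite lt0r_neq0.
Qed.

Lemma SL w : nonneg w -> exists C : 'M[R]_p,
  (forall w', nonneg w' -> hA X nu w' <= \tr (C *m Mw w')) /\ \tr (C *m Mw w) = hA X nu w.
Proof.
move=> w0; have [h|h] := boolP (0 < \det (Mw w)).
  by exists (Cpos w); exact: SL_pos.
have hd : \det (Mw w) == 0.
  by apply: contraNT h => hn; exact: det_pos.
move/det0P: hd => [v vn0 vM].
set n := (v *m v^T) 0 0.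
have n0 : 0 < n.
  rewrite lt_def sq_ge0 andbT; apply: contraNN vn0 => /eqP e.
  by rewrite (sq_eq0 e).
exists (n^-1 *: (v^T *m v)); split.
  move=> w' w0'; rewrite -scalemxAl mxtraceZ hA_E.
  have eq : \tr (v^T *m v *m Mw w') = (v *m Mw w' *m v^T) 0 0.
    by rewrite -mulmxA mxtrace_mulC tr11.
  case: ifP => h'.
    set B := invmx (Mw w'); set V := v^T *m v.
    have cs := CS B V w0'.
    have e1 : bf w' B V = n.
      by rewrite /bf inv_sym mulVmx ?unit_of // mul1mx /V mxtrace_mulC tr11.
    have e2 : bf w' B B = \tr B.
      by rewrite /bf inv_sym mulVmx ?unit_of // mul1mx.
    have e3 : bf w' V V = (v *m Mw w' *m v^T) 0 0 * n.
      rewrite /bf /V trmx_mul trmxK.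
      set s := (v *m Mw w' *m v^T) 0 0.
      have E1 : v *m (Mw w' *m v^T) = s%:M by rewrite /s mulmxA -mx11_scalar.
      rewrite -!mulmxA (mulmxA (Mw w') v^T v) (mulmxA v (Mw w' *m v^T) v) E1.
      by rewrite mul_scalar_mx -scalemxAr mxtraceZ mxtrace_mulC tr11.
    rewrite e1 e2 e3 in cs; rewrite eq.
    by apply: real2 => //; exact: trinv_pos.
  by apply: mulr_ge0; [rewrite invr_ge0 ltW | rewrite eq; exact: qf_ge0].
by rewrite -scalemxAl mxtraceZ Q_zero // mulr0 hA_E (negbTE h).
Qed.


Lemma Mw_tr_lin C w1 w2 a b :
  \tr (C *m Mw (fun i => a * w1 i + b * w2 i)) = a * \tr (C *m Mw w1) + b * \tr (C *m Mw w2).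
Proof.
rewrite !Mw_tr !mulr_sumr -big_split /=; apply: eq_bigr => k _; ring.
Qed.

Lemma hA_concave w1 w2 t : nonneg w1 -> nonneg w2 -> 0 <= t <= 1 ->
  t * hA X nu w1 + (1 - t) * hA X nu w2 <= hA X nu (fun i => t * w1 i + (1 - t) * w2 i).
Proof.
move=> h1 h2 /andP[t0 t1].
have ht : nonneg (fun i => t * w1 i + (1 - t) * w2 i).
  by move=> k; apply: addr_ge0; apply: mulr_ge0 => //; lra.
have [C [HC1 HC2]] := SL ht.
rewrite -HC2 Mw_tr_lin; apply: lerD; apply: ler_wpM2l; try lra; exact: HC1.
Qed.

Lemma hA_ext w1 w2 : (forall j, w1 j = w2 j) -> hA X nu w1 = hA X nu w2.
Proof.
move=> e; have EW : Wmat nu w1 = Wmat nu w2.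
  by rewrite /Wmat; congr diag_mx; apply/rowP => j; rewrite !mxE e.
by rewrite /hA /fdet /info_mx EW.
Qed.


Lemma real_sm (wi e nui g b' phi : R) : 0 < 1 - wi - e -> 0 < 1 - wi -> 0 <= nui -> 0 <= g -> 0 < e ->
  phi - ((1 - (wi + e)) / (1 - wi))^-1 * (phi - (nui * e / (1 - wi)) / ((1 - (wi + e)) / (1 - wi) + (nui * e / (1 - wi)) * g) * b') =
  e * ((1 - wi) * (nui * b') - phi * (1 - wi - e + e * (nui * g))) /
    ((1 - wi - e) * (1 - wi - e + e * (nui * g))).
Proof.
move=> h1 h2 h3 h4 h5.
have hD : 0 < 1 - wi - e + e * (nui * g) by have := mulr_ge0 (ltW h5) (mulr_ge0 h3 h4); lra.
by field; rewrite !lt0r_neq0.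
Qed.


Lemma SM_key w i : nonneg w -> 0 < \det (Mw w) -> w i < 1 ->
  (forall y, 0 <= y <= 1 -> h_assoc X nu w i y <= h_assoc X nu w i (w i)) ->
  nu i * (xr i *m Cpos w *m (xr i)^T) 0 0 <= hA X nu w.
Proof.
move=> w0 h wi1 H.
have phi0 : 0 < \tr (invmx (Mw w)) := trinv_pos w0 h.
have MA : Mw w *m invmx (Mw w) = 1%:M by rewrite mulmxV ?unit_of.
have AM : invmx (Mw w) *m Mw w = 1%:M by rewrite mulVmx ?unit_of.
have As := inv_sym w.
rewrite /Cpos /=.
set A := invmx (Mw w) in phi0 MA AM As *.
set phi := \tr A in phi0 *.
set u := xr i.
set g := (u *m A *m u^T) 0 0.
set b' := (u *m A *m A *m u^T) 0 0.
have -> : nu i * (u *m ((phi ^+ 2)^-1 *: (A *m A)) *m u^T) 0 0 = nu i * b' / phi ^+ 2.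
  by rewrite -scalemxAr -scalemxAl mxE mulmxA /b'; field; rewrite lt0r_neq0.
have hw : hA X nu w = phi^-1 by rewrite hA_E h.
rewrite hw leNgt; apply/negP => Hb.
set b := nu i * b' in Hb.
have bphi : phi < b.
  have : phi^-1 * phi ^+ 2 < b / phi ^+ 2 * phi ^+ 2 by rewrite ltr_pM2r ?exprn_gt0.
  have -> : phi^-1 * phi ^+ 2 = phi by field; rewrite lt0r_neq0.
  by have -> : b / phi ^+ 2 * phi ^+ 2 = b by field; rewrite lt0r_neq0.
have g0 : 0 <= g.
  have -> : g = (u *m A *m Mw w *m (u *m A)^T) 0 0.
    by rewrite trmx_mul As mulmxA -(mulmxA u A) AM mulmx1.
  exact: qf_ge0.
set a := nu i * g.
have a0 : 0 <= a by rewrite mulr_ge0.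
set r := 1 - w i.
have r0 : 0 < r by rewrite /r; lra.
have bpa : 0 < b + phi * a by have := mulr_ge0 (ltW phi0) a0; lra.
set e := r * (b - phi) / (b + phi * a).
have e0 : 0 < e by apply: divr_gt0 => //; apply: mulr_gt0 => //; lra.
have E : e * (b + phi * a) = r * (b - phi) by rewrite /e; field; rewrite lt0r_neq0.
have er : e < r.
  have : e * (b + phi * a) < r * (b + phi * a).
    by rewrite E ltr_pM2l //; have := mulr_ge0 (ltW phi0) a0; lra.
  by rewrite ltr_pM2r.
have er' : e < 1 - w i := er.
have s01 : 0 <= w i + e <= 1 by apply/andP; split; [have := w0 i; lra | lra].
have Hs := H _ s01; rewrite /h_assoc in Hs.
have hwi : hA X nu (fun j => if j == i then w i else (1 - w i) / (1 - w i) * w j) = phi^-1.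
  rewrite -hw; apply: hA_ext => j; case: eqP => [->|_] //.
  by rewrite divff ?mul1r //; apply: lt0r_neq0; exact: r0.
rewrite hwi in Hs.
set c := (1 - (w i + e)) / (1 - w i) in Hs.
set ws := (fun j => if j == i then _ else _) in Hs.
have c0 : 0 < c by rewrite /c; apply: divr_gt0; [lra | exact: r0].
set al := nu i * e / r.
have al0 : 0 <= al by rewrite /al; apply: divr_ge0; [apply: mulr_ge0 => //; exact: ltW | exact: ltW].
have wsn : nonneg ws.
  move=> j; rewrite /ws; case: eqP => _; first by have := w0 i; lra.
  by apply: mulr_ge0 => //; exact: ltW.
have Ms : Mw ws = c *: Mw w + al *: (u^T *m u).
  rewrite !Mw_sum (bigD1 i) //= [X in _ = c *: X + _](bigD1 i) //=.
  rewrite scalerDr -addrA [X in _ = _ + X]addrC addrA; congr (_ + _).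
    rewrite /ws eqxx scalerA -scalerDl; congr (_ *: _).
    by rewrite /c /al /r; field; apply: lt0r_neq0; exact: r0.
  rewrite scaler_sumr; apply: eq_bigr => j /negbTE hj.
  by rewrite /ws hj scalerA; congr (_ *: _); ring.
set UA := u^T *m u *m A.
have F1 : Mw ws *m A = c *: 1%:M + al *: UA by rewrite Ms mulmxDl -!scalemxAl MA.
have E1 : u *m A *m u^T = g%:M by rewrite /g -mx11_scalar.
have F2 : UA *m UA = g *: UA.
  have -> : UA *m UA = u^T *m (u *m A *m u^T) *m u *m A by rewrite /UA !mulmxA.
  by rewrite E1 mul_mx_scalar -!scalemxAl.
set beta := al / (c + al * g).
have den0 : 0 < c + al * g by have := mulr_ge0 al0 g0; lra.
set K := c^-1 *: (A - beta *: (A *m UA)).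
have MK : Mw ws *m K = 1%:M.
  rewrite /K -scalemxAr mulmxBr -scalemxAr mulmxA F1 mulmxDl -scalemxAl mul1mx -scalemxAl F2.
  apply/matrixP => k l; rewrite !mxE /beta; field.
  by rewrite !lt0r_neq0.
have [Mu _] := mulmx1_unit MK.
have dets : 0 < \det (Mw ws) by apply: det_pos => //; rewrite -unitfE -unitmxE.
have invK : invmx (Mw ws) = K by rewrite -[invmx _]mulmx1 -MK mulmxA mulVmx // mul1mx.
have tAU : \tr (A *m UA) = b' by rewrite /UA mxtrace_mulC -!mulmxA mxtrace_mulC !mulmxA tr11.
have trK : \tr K = c^-1 * (phi - beta * b') by rewrite /K mxtraceZ raddfB /= mxtraceZ tAU.
have hs : hA X nu ws = (\tr K)^-1 by rewrite hA_E dets invK.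
rewrite hs in Hs.
have trKpos : 0 < \tr K by rewrite -invK; exact: trinv_pos.
have lt : \tr K < phi.
  rewrite trK -subr_gt0 /beta /al /c /r.
  rewrite real_sm //; last by lra.
  apply: divr_gt0; last by apply: mulr_gt0; [lra | have := mulr_ge0 (ltW e0) a0; rewrite /a; lra].
  apply: mulr_gt0 => //.
  have -> : (1 - w i) * (nu i * b') - phi * (1 - w i - e + e * (nu i * g)) =
    r * (b - phi) - e * (b + phi * a) + e * (b + phi) by rewrite /r /b /a; ring.
  by rewrite -E subrr add0r; apply: mulr_gt0 => //; lra.
have : phi^-1 < (\tr K)^-1 by rewrite ltf_pV2 ?posrE.
by move=> /lt_le_trans /(_ Hs); rewrite ltxx.
Qed.

Lemma part2 w1 w2 t : A_optimal X nu w1 -> A_optimal X nu w2 -> 0 <= t <= 1 ->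
  A_optimal X nu (fun i => t * w1 i + (1 - t) * w2 i).
Proof.
move=> [[n1 s1] o1] [[n2 s2] o2] t01; have /andP[t0 t1] := t01; split.
  split.
    by move=> k; apply: addr_ge0; apply: mulr_ge0 => //; lra.
  by rewrite big_split /= -!mulr_sumr s1 s2; ring.
move=> w' hw'; apply: le_trans (hA_concave n1 n2 t01).
have a := o1 w' hw'; have b := o2 w' hw'.
have ha : t * hA X nu w' <= t * hA X nu w1 by apply: ler_wpM2l.
have hb : (1 - t) * hA X nu w' <= (1 - t) * hA X nu w2 by apply: ler_wpM2l => //; lra.
lra.
Qed.

Lemma hA_self w i : w i < 1 ->
  hA X nu (fun j => if j == i then w i else (1 - w i) / (1 - w i) * w j) = hA X nu w.
Proof.
move=> wi1; apply: hA_ext => j; case: eqP => [->|_] //.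
by rewrite divff ?mul1r //; apply: lt0r_neq0; lra.
Qed.

Lemma part3 w : in_simplex w -> 0 < fdet X nu w ->
  (A_optimal X nu w <-> forall i, w i < 1 ->
     forall y, 0 <= y <= 1 -> h_assoc X nu w i y <= h_assoc X nu w i (w i)).
Proof.
move=> [wn ws] hf; have h : 0 < \det (Mw w) by rewrite MwE.
split.
  move=> [_ o] i wi1 y /andP[y0 y1]; rewrite /h_assoc hA_self //; apply: o; split.
    move=> j; case: eqP => _ //; apply: mulr_ge0 => //.
    by apply: divr_ge0; lra.
  rewrite (bigD1 i) //= eqxx.
  have S : \sum_(j | j != i) w j = 1 - w i.
    by move: ws; rewrite (bigD1 i) //= => <-; ring.
  rewrite (eq_bigr (fun j => (1 - y) / (1 - w i) * w j)); last first.
    by move=> j /negbTE ->.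
  rewrite -mulr_sumr S; field; apply: lt0r_neq0; lra.
move=> H; split => //.
move=> w' [wn' ws'].
have [HC1 HC2] := SL_pos wn h.
apply: le_trans (HC1 w' wn') _; rewrite Mw_tr.
set d := fun k => nu k * (xr k *m Cpos w *m (xr k)^T) 0 0.
have hd : forall k, d k <= hA X nu w.
  move=> k; have [wk1|wk1] := ltP (w k) 1; first exact: (SM_key wn h wk1 (H k wk1)).
  rewrite -HC2 Mw_tr (bigD1 k) //=.
  have S : \sum_(j | j != k) w j = 1 - w k.
    by move: ws; rewrite (bigD1 k) //= => <-; ring.
  have S0 : \sum_(j | j != k) w j = 0.
    apply/eqP; rewrite eq_le; apply/andP; split; first by rewrite S; lra.
    by apply: sumr_ge0 => j _; exact: wn.
  have wk : w k = 1 by move: S; rewrite S0; lra.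
  rewrite big1 ?addr0 ?wk ?mul1r // => j hj.
  by rewrite (psumr_eq0P (fun j _ => wn j) S0) // mul0r.
apply: le_trans (_ : \sum_k w' k * hA X nu w <= _).
  by apply: ler_sum => k _; apply: ler_wpM2l; [exact: wn'|exact: hd].
by rewrite -mulr_suml ws' mul1r.
Qed.

End Alg.

Section Top.
Variables (R : realType) (m : nat).

Lemma sum_continuous (F : 'I_m -> 'rV[R]_m -> R) :
  (forall k, continuous (F k)) -> continuous (fun r => \sum_k F k r).
Proof.
move=> Fc x.
elim: (index_enum _) => [|k l IH].
  under eq_fun do rewrite big_nil.
  exact: cst_continuous.
under eq_fun do rewrite big_cons.
apply: (@continuousD _ _ _ (F k) (fun r => \sum_(j <- l) F j r)); [exact: Fc | exact: IH].
Qed.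

Lemma lin_continuous (c : 'I_m -> R) : continuous (fun r : 'rV[R]_m => \sum_k r 0 k * c k).
Proof.
apply: sum_continuous => k x.
apply: continuousM; [exact: coord_continuous | exact: cst_continuous].
Qed.


Lemma seq_max (I : eqType) (l : seq I) (F : I -> R) (s : R) :
  (forall i, i \in l -> F i < s) -> exists c, c < s /\ forall i, i \in l -> F i <= c.
Proof.
elim: l => [|a l IH] H.
  by exists (s - 1); split => //; lra.
have [c [cs cub]] : exists c, c < s /\ forall i, i \in l -> F i <= c.
  by apply: IH => i il; apply: H; rewrite in_cons il orbT.
have Fa : F a < s by apply: H; rewrite in_cons eqxx.
exists (Num.max (F a) c); split; first by rewrite gt_max Fa cs.
move=> i; rewrite in_cons => /orP[/eqP ->|il]; first by rewrite le_max lexx.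
by rewrite le_max cub // orbT.
Qed.

Lemma part1 (p : nat) (X : 'M[R]_(m, p)) (nu : 'I_m -> R) :
  (forall i, 0 <= nu i) -> (0 < p)%N -> (0 < m)%N -> exists w, A_optimal X nu w.
Proof.
move=> nu0 p0 m0.
pose toW (r : 'rV[R]_m) := fun k => r 0 k.
pose S := [set r : 'rV[R]_m | (forall k, 0 <= r 0 k) /\ \sum_k r 0 k = 1].
pose H r := hA X nu (toW r).
have Sle1 r k : S r -> r 0 k <= 1.
  move=> [rn rs]; move: rs; rewrite (bigD1 k) //= => rs.
  have : 0 <= \sum_(j | j != k) r 0 j by apply: sumr_ge0 => j _; exact: rn.
  lra.
pose r0 : 'rV[R]_m := const_mx (m%:R^-1).
have Sr0 : S r0.
  split; first by move=> k; rewrite mxE invr_ge0 ler0n.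
  under eq_bigr do rewrite mxE.
  by rewrite sumr_const card_ord -[_ *+ m]mulr_natr mulVf // pnatr_eq0 -lt0n.
pose E := H @` S.
have hsup : has_sup E.
  split; first by exists (H r0), r0.
  have [C0 [HC1 _]] := SL X nu0 p0 (w := toW r0) (fun k => (Sr0.1 k)).
  pose c k := nu k * (xr X k *m C0 *m (xr X k)^T) 0 0.
  exists (\sum_k `|c k|) => y [r Sr <-].
  apply: le_trans (HC1 _ Sr.1) _; rewrite Mw_tr.
  apply: le_trans (_ : \sum_k r 0 k * \sum_j `|c j| <= _).
    apply: ler_sum => k _; apply: ler_wpM2l; first exact: Sr.1.
    apply: le_trans (ler_norm _) _; rewrite (bigD1 k) //= lerDl.
    by apply: sumr_ge0 => j _; exact: normr_ge0.
  by rewrite -mulr_suml Sr.2 mul1r.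
set s := sup E.
have [//|nex] := pselect (exists w, A_optimal X nu w).
have Hlt r : S r -> H r < s.
  move=> Sr; have le : H r <= s by apply: sup_upper_bound => //; exists r.
  rewrite lt_neqAle le andbT; apply/eqP => e; apply: nex; exists (toW r); split => //.
  move=> w' [wn' ws']; rewrite -/(H r) e.
  have -> : hA X nu w' = H (\row_k w' k) by apply: hA_ext => j; rewrite /toW mxE.
  apply: sup_upper_bound => //; exists (\row_k w' k) => //; split.
    by move=> k; rewrite mxE.
  by under eq_bigr do rewrite mxE.
pose I := ('rV[R]_m * 'M[R]_p)%type.
pose D : set I := [set ic | S ic.1 /\
  (forall w', nonneg w' -> hA X nu w' <= \tr (ic.2 *m Mw X nu w'))].
pose f (ic : I) : set 'rV[R]_m :=
  [set r | \tr (ic.2 *m Mw X nu (toW r)) < (H ic.1 + s) / 2].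
have fopen ic : open (f ic).
  pose g := fun r : 'rV[R]_m => \sum_k r 0 k * (nu k * (xr X k *m ic.2 *m (xr X k)^T) 0 0).
  have -> : f ic = g @^-1` [set y | y < (H ic.1 + s) / 2].
    by apply/seteqP; split => r; rewrite /f /g /preimage /= Mw_tr.
  by apply: open_comp; [move=> r _; exact: lin_continuous | exact: open_lt].
have Sbd : bounded_set S.
  exists 1; split; first by rewrite num_real.
  move=> M M1 r Sr /=; rewrite /Num.Def.normr /= mx_normrE.
  apply: bigmax_le; first lra.
  move=> [i j] _ /=; rewrite ord1; have := Sle1 r j Sr; have := Sr.1 j.
  move=> h1 h2; rewrite ger0_norm //; lra.
have Scl : closed S.
  have -> : S = (\bigcap_(k in [set: 'I_m]) ((fun r : 'rV[R]_m => r 0 k) @^-1` [set y | 0 <= y]))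
      `&` ((fun r : 'rV[R]_m => \sum_k r 0 k * 1) @^-1` [set y | y = 1]).
    apply/seteqP; split => r /=.
      by move=> [rn rs]; split; [move=> k _; exact: rn | under eq_bigr do rewrite mulr1].
    by move=> [rn rs]; split; [move=> k; exact: rn | move: rs; under eq_bigr do rewrite mulr1].
  apply: closedI.
    apply: closed_bigI => k _; apply: preimage_closed; last exact: closed_ge.
    by move=> r _; exact: coord_continuous.
  apply: preimage_closed; last exact: closed_eq.
  by move=> r _; exact: (@lin_continuous (fun=> 1) r).
have Scomp : compact S by apply: bounded_closed_compact.
have cov : S `<=` cover D f.
  move=> r Sr.
  have [C [HC1 HC2]] := SL X nu0 p0 (w := toW r) (fun k => (Sr.1 k)).
  exists (r, C); first by split.
  rewrite /f /= HC2 -/(H r); have := Hlt r Sr; lra.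
move: Scomp; rewrite compact_cover => Scomp.
have [D' D'D Scov] := Scomp _ D f (fun ic _ => fopen ic) cov.
have [c [cs cub]] : exists c, c < s /\ forall ic, ic \in (D' : seq I) -> (H ic.1 + s) / 2 <= c.
  apply: seq_max => ic icD.
  have : D ic by have := D'D ic icD; rewrite inE.
  move=> [Sic _]; have := Hlt _ Sic; lra.
have sc : 0 < s - c by rewrite subr_gt0.
have [y [r Sr ry] Hy] := sup_adherent sc hsup.
rewrite -ry in Hy.
have [ic icD' fr] := Scov r Sr.
have icD : D ic by have := D'D ic icD'; rewrite inE.
have := icD.2 (toW r) Sr.1; rewrite -/(H r) => h1.
exfalso; have Hy' : s - (s - c) < H r := Hy; have := cub ic icD'; move: fr; rewrite /f /=; lra.
Qed.

End Top.

Theorem theorem3 (R : realType) (d m p : nat) (x : 'I_m -> 'rV[R]_d)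
    (q : 'rV[R]_d -> 'rV[R]_p) (nu : 'I_m -> R) :
  (1 <= d)%N -> (2 <= p)%N -> (p < m)%N ->
  injective x ->
  (forall i, 0 <= nu i) ->
  let X : 'M[R]_(m, p) := \matrix_(i < m, j < p) q (x i) 0 j in
  (* (i) existence *)
  (exists w, A_optimal X nu w) /\
  (* (ii) convexity *)
  (forall w1 w2 (t : R), A_optimal X nu w1 -> A_optimal X nu w2 ->
     0 <= t <= 1 -> A_optimal X nu (fun i => t * w1 i + (1 - t) * w2 i)) /\
  (* (iii) characterization *)
  (forall w, in_simplex w -> 0 < fdet X nu w ->
     (A_optimal X nu w <->
      (forall i, w i < 1 ->
         forall y, 0 <= y <= 1 -> h_assoc X nu w i y <= h_assoc X nu w i (w i)))).
Proof.
move=> d1 p2 pm xinj nu0 X.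
have p0 : (0 < p)%N by apply: leq_trans p2.
have m0 : (0 < m)%N := leq_ltn_trans (leq0n p) pm.
split; first exact: part1.
split; first by move=> w1 w2 t; exact: part2.
by move=> w; exact: part3.
Qed.
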